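(* Suppose $\pi$ is an irreducible permutation on a finite alphabet $\mathcal{A}$ with $\pi=\pi^{-1}$. Then $\pi$ is Lagrangian, i.e. $H^\pi_V=\{x\in H^\pi:\omega(x,y)=0\text{ for all }y\in H^\pi_V\}$.
   Context: Let $\pi=(\pi_0,\pi_1)$ with bijections $\pi_\varepsilon:\mathcal{A}\to\{1,\dots,d\}$, irreducible (no $k<d$ with $\pi_0^{-1}(\{1..k\})=\pi_1^{-1}(\{1..k\})$); $\pi^{-1}=(\pi_1,\pi_0)$, and $\pi=\pi^{-1}$ means $\pi_1\circ\pi_0^{-1}$ is an involution. Define $\Omega=\Omega_\pi$ by $\Omega_{\alpha,\beta}=1$ if $\pi_0(\alpha)<\pi_0(\beta)$ and $\pi_1(\alpha)>\pi_1(\beta)$, $-1$ if $\pi_0(\alpha)>\pi_0(\beta)$ and $\pi_1(\alpha)<\pi_1(\beta)$, $0$ otherwise. Let $H^\pi=\Omega\mathbb{R}^{\mathcal{A}}$ with symplectic form $\omega(\Omega u,\Omega v)=u^t\Omega v$. Let $\pi_{\mathcal{A}}=\pi_0^{-1}\circ\pi_1$, $\mathbf{e}_{\mathcal{B}}=\sum_{\alpha\in\mathcal{B}}\mathbf{e}_\alpha$, $\mathbf{v}_{\mathcal{B}}=\Omega\mathbf{e}_{\mathcal{B}}$, and $H^\pi_V=\mathrm{span}\{\mathbf{v}_{\mathcal{B}}:\mathcal{B}\text{ an orbit of }\pi_{\mathcal{A}}\}$. *)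

(* Defs.v *)
From HB Require Import structures.
From mathcomp Require Import all_boot all_order all_algebra.
Set Implicit Arguments. Unset Strict Implicit. Unset Printing Implicit Defensive.
Import Order.TTheory GRing.Theory Num.Theory.
Local Open Scope ring_scope.

(* Letters are indexed by a finType A; positions {1,..,d} are encoded as 'I_n
   (0-based, n = d = #|A| forced by bijectivity). *)
Section Defs.
Variables (A : finType) (n : nat) (pi0 pi1 : A -> 'I_n).

(* irreducible: no k with 1 <= k < d (1-based) such that
   pi0^{-1}{1..k} = pi1^{-1}{1..k}.  In 0-based terms {1..k} = {i | i < k}. *)
Definition irreducible_perm : Prop :=
  forall k : nat, (0 < k)%N -> (k < n)%N ->
    [set a | (pi0 a < k)%N] != [set a | (pi1 a < k)%N].

(* pi = pi^{-1}: sigma := pi1 \o pi0^{-1} is an involution, i.e.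
   for all i, sigma (sigma i) = i, spelled out with the preimages under pi0. *)
Definition perm_self_inverse : Prop :=
  forall (i : 'I_n) (a b : A), pi0 a = i -> pi0 b = pi1 a -> pi1 b = i.

(* pi_A = pi0^{-1} \o pi1 (the default value is never used when pi0 is onto). *)
Definition piA (a : A) : A := odflt a [pick b | pi0 b == pi1 a].

Variable R : realFieldType.

Definition Omega (a b : A) : R :=
  if ((pi0 a < pi0 b)%N && (pi1 a > pi1 b)%N) then 1
  else if ((pi0 a > pi0 b)%N && (pi1 a < pi1 b)%N) then -1
  else 0.

Definition Omega_mul (u : {ffun A -> R}) : {ffun A -> R} :=
  [ffun a => \sum_b Omega a b * u b].

Definition omega_form (u v : {ffun A -> R}) : R :=
  \sum_a \sum_b u a * Omega a b * v b.

Definition e_set (B : {set A}) : {ffun A -> R} := [ffun a => if a \in B then 1 else 0].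
Definition v_set (B : {set A}) : {ffun A -> R} := Omega_mul (e_set B).

Definition orbitA (a : A) : {set A} := [set b | fconnect piA a b].

Definition Hpi (x : {ffun A -> R}) : Prop := exists u, x = Omega_mul u.

Definition HV (x : {ffun A -> R}) : Prop :=
  exists c : {set A} -> R,
    x = [ffun a => \sum_(B in [set orbitA a | a : A]) c B * v_set B a].

End Defs.

(* Main.v *)
Require Import Defs.
From HB Require Import structures.
From mathcomp Require Import all_boot all_order all_algebra.
From mathcomp Require Import ring lra.
Import Order.TTheory GRing.Theory Num.Theory.
Local Open Scope ring_scope.

Section S.
Variables (R : realFieldType) (A : finType) (n : nat) (pi0 pi1 : A -> 'I_n).
Hypotheses (b0 : bijective pi0) (si : perm_self_inverse pi0 pi1).
Local Notation t := (piA pi0 pi1).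
Local Notation Om := (Omega pi0 pi1 R).
Local Notation Omul := (@Omega_mul A n pi0 pi1 R).
Local Notation form := (@omega_form A n pi0 pi1 R).

Lemma pi0t a : pi0 (t a) = pi1 a.
Proof.
rewrite /piA; case: pickP => [b /eqP //|H].
case: b0 => g K1 K2; by have := H (g (pi1 a)); rewrite K2 eqxx.
Qed.

Lemma pi1t a : pi1 (t a) = pi0 a.
Proof. exact: (si (pi0 a) a (t a) erefl (pi0t a)). Qed.

Lemma ttK : cancel t t.
Proof. by move=> a; apply: (bij_inj b0); rewrite pi0t pi1t. Qed.

Lemma t_inj : injective t.
Proof. exact: can_inj ttK. Qed.

Lemma Om_t a b : Om (t a) (t b) = - Om a b.
Proof.
rewrite /Omega !pi0t !pi1t.
case: (ltngtP (pi0 a) (pi0 b)); case: (ltngtP (pi1 a) (pi1 b)) => //=;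
  by rewrite ?oppr0 ?opprK.
Qed.

Lemma Om_anti a b : Om b a = - Om a b.
Proof.
rewrite /Omega.
case: (ltngtP (pi0 a) (pi0 b)); case: (ltngtP (pi1 a) (pi1 b)) => //=;
  by rewrite ?oppr0 ?opprK.
Qed.

Definition tf (u : {ffun A -> R}) : {ffun A -> R} := [ffun a => u (t a)].

Lemma Omul_t u a : Omul u (t a) = - Omul (tf u) a.
Proof.
rewrite !ffunE (reindex_inj t_inj) /= -sumrN; apply: eq_bigr => b _.
by rewrite Om_t ffunE mulNr.
Qed.

Lemma form_eq u v : form u v = \sum_a u a * Omul v a.
Proof.
rewrite /omega_form; apply: eq_bigr => a _; rewrite ffunE mulr_sumr.
by apply: eq_bigr => b _; rewrite mulrA.
Qed.

Lemma form_anti u v : form u v = - form v u.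
Proof.
rewrite /omega_form exchange_big -sumrN; apply: eq_bigr => a _.
rewrite -sumrN; apply: eq_bigr => b _; rewrite (Om_anti a b); ring.
Qed.

Lemma form_t u v : form u v = - form (tf u) (tf v).
Proof.
rewrite /omega_form (reindex_inj t_inj) -sumrN; apply: eq_bigr => a _.
rewrite (reindex_inj t_inj) -sumrN; apply: eq_bigr => b _.
rewrite Om_t !ffunE; ring.
Qed.

Definition tinv (w : {ffun A -> R}) := forall a, w (t a) = w a.

Lemma tf_inv w : tinv w -> tf w = w.
Proof. by move=> H; apply/ffunP=> a; rewrite ffunE H. Qed.

Lemma form_inv0 w w' : tinv w -> tinv w' -> form w w' = 0.
Proof.
move=> Hw Hw'; have := form_t w w'; rewrite !tf_inv // => H; lra.
Qed.

Lemma orbit_t c a : (t a \in orbitA pi0 pi1 c) = (a \in orbitA pi0 pi1 c).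
Proof. by rewrite !inE -same_fconnect1_r //; exact: t_inj. Qed.

Lemma orbit_same a b : b \in orbitA pi0 pi1 a -> orbitA pi0 pi1 a = orbitA pi0 pi1 b.
Proof.
rewrite inE => Hab; apply/setP => c; rewrite !inE.
apply/idP/idP => H.
- by apply: connect_trans H; rewrite fconnect_sym //; exact: t_inj.
- exact: connect_trans Hab H.
Qed.

Lemma const_orbit w a b : tinv w -> b \in orbitA pi0 pi1 a -> w b = w a.
Proof.
rewrite inE => Hw /iter_findex <-; elim: (findex _ _ _) => //= k IH.
by rewrite Hw.
Qed.

Lemma HV_inv x : HV pi0 pi1 x <-> exists w, tinv w /\ x = Omul w.
Proof.
split.
- case=> c ->.
  exists [ffun b => \sum_(B in [set orbitA pi0 pi1 a | a : A]) c B * e_set R B b].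
  split.
  + move=> a; rewrite !ffunE; apply: eq_bigr => B /imsetP [a0 _ ->].
    by rewrite !ffunE orbit_t.
  + apply/ffunP => a; rewrite !ffunE.
    under [RHS]eq_bigr do rewrite ffunE mulr_sumr.
    rewrite exchange_big; apply: eq_bigr => B _; rewrite ffunE mulr_sumr.
    by apply: eq_bigr => b _; ring.
- case=> w [Hw ->].
  exists (fun B : {set A} => if [pick b in B] is Some b then w b else 0).
  apply/ffunP => a; rewrite !ffunE.
  symmetry; under eq_bigr do rewrite /v_set ffunE mulr_sumr.
  rewrite exchange_big; apply: eq_bigr => b _.
  under eq_bigr do rewrite mulrCA.
  rewrite -mulr_sumr; congr (_ * _).
  have Hin : orbitA pi0 pi1 b \in [set orbitA pi0 pi1 a0 | a0 : A] by apply: imset_f.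
  rewrite (bigD1 _ Hin) /= big1 ?addr0.
  + rewrite ffunE inE connect0 mulr1.
    case: pickP => [b' Hb'|H]; first exact: const_orbit.
    by have := H b; rewrite inE connect0.
  + move=> B /andP [/imsetP [a0 _ ->] ne]; rewrite ffunE.
    case: ifP => Hb; last by rewrite mulr0.
    by rewrite (orbit_same _ _ Hb) eqxx in ne.
Qed.

Lemma Omul_split u a :
  Omul u a = Omul [ffun b => (u b + u (t b)) / 2] a + Omul [ffun b => (u b - u (t b)) / 2] a.
Proof.
rewrite !ffunE -big_split; apply: eq_bigr => b _; rewrite !ffunE /= -mulrDr; congr (_ * _); lra.
Qed.

Lemma main_aux (x : {ffun A -> R}) : HV pi0 pi1 x <->
    (Hpi pi0 pi1 x /\ forall y : {ffun A -> R}, HV pi0 pi1 y ->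
       forall u v : {ffun A -> R},
         x = Omega_mul pi0 pi1 u -> y = Omega_mul pi0 pi1 v ->
         omega_form pi0 pi1 u v = 0).
Proof.
split.
- case/HV_inv=> w [Hw ->]; split; first by exists w.
  move=> y /HV_inv [w' [Hw' ->]] u v Hu Hv.
  rewrite form_eq -Hv -form_eq form_anti form_eq -Hu -form_eq form_inv0 ?oppr0 //.
- case=> [[u Hu] H].
  set up := [ffun b => (u b + u (t b)) / 2].
  set um := [ffun b => (u b - u (t b)) / 2].
  set z := Omul um.
  have Hup : tinv up by move=> a; rewrite !ffunE ttK addrC.
  have Hz : tinv z.
    move=> a; rewrite /z Omul_t !ffunE -sumrN; apply: eq_bigr => b _.
    rewrite !ffunE ttK; by field.
  have HVz : HV pi0 pi1 (Omul z) by apply/HV_inv; exists z.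
  have H0 := H _ HVz u z Hu erefl.
  have Hsum : \sum_a z a * z a = 0.
    move: H0; rewrite form_anti form_eq.
    under eq_bigr do rewrite Omul_split mulrDr.
    rewrite big_split /= -form_eq form_inv0 // add0r.
    by rewrite -/um -/z => /eqP; rewrite oppr_eq0 => /eqP.
  have z0 : forall a, z a = 0.
    move=> a; have := @psumr_eq0P _ A predT (fun a => z a * z a) (fun i _ => (sqr_ge0 (z i))) Hsum a isT.
    by move/eqP; rewrite mulf_eq0 orbb => /eqP.
  apply/HV_inv; exists up; split => //.
  apply/ffunP => a; rewrite Hu Omul_split -/um -/z z0 addr0 //.
Qed.

End S.

Theorem mainTheorem8 (R : realFieldType) (A : finType) (n : nat)
    (pi0 pi1 : A -> 'I_n) :
  bijective pi0 -> bijective pi1 ->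
  irreducible_perm pi0 pi1 ->
  perm_self_inverse pi0 pi1 ->
  forall x : {ffun A -> R},
    HV pi0 pi1 x <->
    (Hpi pi0 pi1 x /\
     forall y : {ffun A -> R}, HV pi0 pi1 y ->
       forall u v : {ffun A -> R},
         x = Omega_mul pi0 pi1 u -> y = Omega_mul pi0 pi1 v ->
         omega_form pi0 pi1 u v = 0).
Proof.
move=> b0 _ _ si x; exact: main_aux.
Qed.
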